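(* Let $\phi:R_1\to R_2^\varepsilon$ and $\psi:R_2\to R_1^\varepsilon$ define an $\varepsilon$-interleaving between Reeb graphs $R_1,R_2$. Let $v$ be a split node or a maximum of $R_1$, let $v'=s(v)\in R_1^\varepsilon$, and let $z$ be a split node or a maximum of $R_2^\varepsilon$. Let $M^-_\varepsilon(z)\subset R_2^\varepsilon$ be the set of points $x$ connected to $z$ by a monotone path $Q_x$ of height at most $2\varepsilon$ with $f_2^\varepsilon(q)\le f_2^\varepsilon(z)$ for all $q\in Q_x$. If $\phi(v)\in M^-_\varepsilon(z)$, then $\phi^\varepsilon(v')\in P^\varepsilon(z)\subset R_2^{2\varepsilon}$. Symmetrically, if $v$ is a join node or minimum of $R_1$, $z$ a join node or minimum of $R_2^\varepsilon$, $M^+_\varepsilon(z)$ the set of points connected to $z$ by a monotone path of height at most $2\varepsilon$ lying entirely at or above $f_2^\varepsilon(z)$, and $\phi(v)\in M^+_\varepsilon(z)$, then $\phi^\varepsilon(s(v))\in P^\varepsilon(z)$.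
   Context: A Reeb graph $R=(G,f)$ is a finite multigraph $G$ (identified with its geometric realization) with a continuous $f$ strictly monotone on each edge and injective on nodes. Split node: up-degree $>1$, down-degree $1$; join node: up-degree $1$, down-degree $>1$; maximum: up-degree $0$, down-degree $1$; minimum: up-degree $1$, down-degree $0$ (degenerate nodes are treated as superpositions of such nodes joined by zero-length edges). A morphism is a continuous function-preserving map. The height of a path is the difference between the maximum and minimum of $f$ on it; a path is monotone if $f$ is monotone along it. For $\varepsilon\ge0$, $\mathcal T^\varepsilon(R)=G\times[-\varepsilon,\varepsilon]$ with $F^\varepsilon(x,t)=f(x)+t$; $R^\varepsilon$ is the Reeb graph of $(\mathcal T^\varepsilon(R),F^\varepsilon)$ with quotient map $\pi$ and function $f^\varepsilon$; $(R^\varepsilon)^\delta$ is identified with $R^{\varepsilon+\delta}$. The shift is $\eta(x)=\pi(x,0)$, and $\eta^{2\varepsilon}:R\to R^{2\varepsilon}$ the $2\varepsilon$-shift. For a morphism $\phi:R_1\to R_2^\varepsilon$, $\phi^\delta:R_1^\delta\to R_2^{\varepsilon+\delta}$ is induced by $(x,t)\mapsto(\phi(x),t)$ on thickenings. An $\varepsilon$-interleaving is a pair $\phi:R_1\to R_2^\varepsilon$, $\psi:R_2\to R_1^\varepsilon$ with $\phi^\varepsilon\circ\psi=\eta_2^{2\varepsilon}$, $\psi^\varepsilon\circ\phi=\eta_1^{2\varepsilon}$. For $x\in R$, $P^\varepsilon(x)=\pi(\{x\}\times[-\varepsilon,\varepsilon])\subset R^\varepsilon$. For a maximum or split node $v$,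 $s(v)=\pi(v,\varepsilon)$; for a minimum or join node, $s(v)=\pi(v,-\varepsilon)$. *)

(* Defs.v *)
From HB Require Import structures.
From mathcomp Require Import all_boot all_order all_algebra.
From mathcomp Require Import all_classical all_reals all_analysis.
Set Implicit Arguments. Unset Strict Implicit. Unset Printing Implicit Defensive.
Import Order.TTheory GRing.Theory Num.Theory.
Import numFieldNormedType.Exports.
Local Open Scope classical_set_scope.
Local Open Scope ring_scope.

Section Reeb.
Variable R : realType.

(* A Reeb graph structure on (X, f): X is (homeomorphic to) the geometric
   realization of a finite multigraph whose edges are parametrized by the
   value of f (so f is strictly monotone on edges).  Since X is Hausdorff and
   covered by finitely many compact images, X carries the realization
   (quotient) topology. *)
Record reeb_structure (X : topologicalType) (f : X -> R) := ReebStructure {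
  rs_V : finType;
  rs_E : finType;
  rs_src : rs_E -> rs_V;
  rs_tgt : rs_E -> rs_V;
  rs_node : rs_V -> X;
  rs_edge : rs_E -> R -> X;
  rs_f_cont : continuous f;
  rs_hausdorff : hausdorff_space X;
  rs_f_node_inj : injective (f \o rs_node);
  rs_edge_lt : forall e, f (rs_node (rs_src e)) < f (rs_node (rs_tgt e));
  rs_edge_cont : forall e,
    {within `[f (rs_node (rs_src e)), f (rs_node (rs_tgt e))],
       continuous (rs_edge e)};
  rs_edge_src : forall e, rs_edge e (f (rs_node (rs_src e))) = rs_node (rs_src e);
  rs_edge_tgt : forall e, rs_edge e (f (rs_node (rs_tgt e))) = rs_node (rs_tgt e);
  rs_edge_f : forall e t, f (rs_node (rs_src e)) <= t <= f (rs_node (rs_tgt e)) ->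
    f (rs_edge e t) = t;
  rs_cover : forall x : X, (exists v, x = rs_node v) \/
    (exists e t, f (rs_node (rs_src e)) < t < f (rs_node (rs_tgt e)) /\ x = rs_edge e t);
  rs_node_not_edge : forall v e t, f (rs_node (rs_src e)) < t < f (rs_node (rs_tgt e)) ->
    rs_node v <> rs_edge e t;
  rs_edge_inj : forall e e' t t',
    f (rs_node (rs_src e)) < t < f (rs_node (rs_tgt e)) ->
    f (rs_node (rs_src e')) < t' < f (rs_node (rs_tgt e')) ->
    rs_edge e t = rs_edge e' t' -> e = e'
}.

Definition is_reeb_graph (X : topologicalType) (f : X -> R) : Prop :=
  exists S : reeb_structure f, True.

Definition updeg (X : topologicalType) (f : X -> R) (S : reeb_structure f)
  (u : rs_V S) : nat := #|[pred e | rs_src e == u]|.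
Definition downdeg (X : topologicalType) (f : X -> R) (S : reeb_structure f)
  (u : rs_V S) : nat := #|[pred e | rs_tgt e == u]|.

(* x is a split node or a maximum (possibly as the upper part of a degenerate
   node): a node with up-degree different from 1. *)
Definition split_or_max (X : topologicalType) (f : X -> R) (x : X) : Prop :=
  exists (S : reeb_structure f) (u : rs_V S), rs_node u = x /\ updeg u <> 1%N.
Definition join_or_min (X : topologicalType) (f : X -> R) (x : X) : Prop :=
  exists (S : reeb_structure f) (u : rs_V S), rs_node u = x /\ downdeg u <> 1%N.

Definition thick_set (X : Type) (eps : R) : set (X * R) :=
  [set p | `|p.2| <= eps].
Arguments thick_set X eps : clear implicits.
Definition thick_fun (X : Type) (f : X -> R) (p : X * R) : R := f p.1 + p.2.

(* (Y, pi, g) is the Reeb graph of (T^eps(X), F^eps): pi restricted to the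
   thickening is onto Y, identifies exactly the points lying in the same
   connected component of a level set of F^eps, Y has the quotient topology,
   and g o pi = F^eps. *)
Definition is_thickening (X Y : topologicalType) (f : X -> R) (eps : R)
  (pi : X * R -> Y) (g : Y -> R) : Prop :=
  [/\ (forall y : Y, exists p, thick_set X eps p /\ pi p = y),
      (forall p q, thick_set X eps p -> thick_set X eps q ->
         (pi p = pi q <->
          (thick_fun f p = thick_fun f q /\
           connected_component
             (thick_set X eps `&` [set r | thick_fun f r = thick_fun f p]) p q))),
      (forall p, thick_set X eps p -> g (pi p) = thick_fun f p) &
      (forall U : set Y, open U <->
         exists O : set (X * R), open O /\
           pi @^-1` U `&` thick_set X eps = O `&` thick_set X eps)].

Definition reeb_morphism (X Y : topologicalType) (f : X -> R) (g : Y -> R)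
  (h : X -> Y) : Prop := continuous h /\ forall x, g (h x) = f x.

Definition path_between (Y : topologicalType) (gam : R -> Y) (x z : Y) : Prop :=
  [/\ {within `[0, 1], continuous gam}, gam 0 = x & gam 1 = z].
Definition monotone_path (Y : topologicalType) (g : Y -> R) (gam : R -> Y) : Prop :=
  {in `[0, 1] &, {homo (g \o gam) : a b / a <= b}} \/
  {in `[0, 1] &, {homo (g \o gam) : a b / a <= b >-> b <= a}}.
Definition path_height_le (Y : topologicalType) (g : Y -> R) (gam : R -> Y) (h : R) : Prop :=
  forall a b, a \in `[0, 1] -> b \in `[0, 1] -> g (gam a) - g (gam b) <= h.

Definition Mminus (Y : topologicalType) (g : Y -> R) (eps : R) (z : Y) : set Y :=
  [set x | exists gam, [/\ path_between gam x z, monotone_path g gam,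
     path_height_le g gam (2 * eps) &
     forall a, a \in `[0, 1] -> g (gam a) <= g z]].
Definition Mplus (Y : topologicalType) (g : Y -> R) (eps : R) (z : Y) : set Y :=
  [set x | exists gam, [/\ path_between gam x z, monotone_path g gam,
     path_height_le g gam (2 * eps) &
     forall a, a \in `[0, 1] -> g z <= g (gam a)]].

Definition Pset (Y W : Type) (rho : Y * R -> W) (eps : R) (z : Y) : set W :=
  [set w | exists t, `|t| <= eps /\ w = rho (z, t)].

End Reeb.

(* Main.v *)
Require Import Defs.
From HB Require Import structures.
From mathcomp Require Import all_boot all_order all_algebra.
From mathcomp Require Import all_classical all_reals all_analysis.
From mathcomp Require Import lra.
Import Order.TTheory GRing.Theory Num.Theory.
Import numFieldNormedType.Exports.
Local Open Scope classical_set_scope.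
Local Open Scope ring_scope.

Lemma thick_cont (R : realType) (X : topologicalType) (f : X -> R) :
  continuous f -> continuous (thick_fun f).
Proof.
move=> hf p; rewrite /thick_fun.
apply: (@cvgD _ _ _ _ _ (fun q : X * R => f q.1) (fun q : X * R => q.2)).
  by apply: (cvg_comp _ _ (@cvg_fst _ _ _ _ _)); exact: hf.
exact: cvg_snd.
Qed.

Lemma g_cont (R : realType) (X Y : topologicalType) (f : X -> R) (eps : R)
  (pi : X * R -> Y) (g : Y -> R) :
  continuous f -> is_thickening f eps pi g -> continuous g.
Proof.
move=> hf [_ _ hg ho]; apply/continuousP => A oA.
apply ho; exists (thick_fun f @^-1` A); split.
  by move: (@thick_cont R X f hf) => /continuousP; apply.
apply/seteqP; split => p [h1 h2]; split => //; rewrite /preimage /=.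
  by rewrite -hg.
by rewrite hg.
Qed.

Lemma F_cont (R : realType) (Y : topologicalType) (g : Y -> R) (c : R) :
  continuous g -> continuous (fun y => (y, c - g y)).
Proof.
move=> hg y.
apply: (@cvg_pair _ _ _ (nbhs y) (nbhs y) (nbhs (c - g y)) _ _ _ id (fun y => c - g y)).
  exact: cvg_id.
apply: cvgB; first exact: cvg_cst.
exact: hg.
Qed.

Lemma key (R : realType) (Y W : topologicalType) (g : Y -> R) (eps : R)
  (rho : Y * R -> W) (k : W -> R) (gam : R -> Y) (c : R) :
  continuous g -> is_thickening g eps rho k -> {within `[0, 1], continuous gam} ->
  (forall s, s \in `[0, 1] -> `|c - g (gam s)| <= eps) ->
  rho (gam 0, c - g (gam 0)) = rho (gam 1, c - g (gam 1)).
Proof.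
move=> hg [_ hid _ _] hgam hb.
have i0 : (0:R) \in `[0, 1] by rewrite in_itv /= lexx ler01.
have i1 : (1:R) \in `[0, 1] by rewrite in_itv /= lexx ler01.
have tf : forall y, thick_fun g (y, c - g y) = c.
  by move=> y; rewrite /thick_fun /= addrC subrK.
apply/hid; rewrite /thick_set /=; [exact: hb|exact: hb|].
split; first by rewrite !tf.
exists ((fun y => (y, c - g y)) @` (gam @` `[0, 1])); last first.
  by exists (gam 1) => //; exists 1.
split.
- by exists (gam 0) => //; exists 0.
- move=> q [y [s hs <-] <-]; split; first exact: hb.
  by rewrite /= !tf.
- apply: connected_continuous_connected.
    apply: connected_continuous_connected => //.
    exact: segment_connected.
  by apply: continuous_subspaceT; exact: F_cont.
Qed.

Theorem lemma1 (R : realType) (eps : R) (heps : 0 <= eps)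
  (X1 X2 Y1 Y2 W1 W2 : topologicalType)
  (f1 : X1 -> R) (f2 : X2 -> R) (g1 : Y1 -> R) (g2 : Y2 -> R)
  (k1 : W1 -> R) (k2 : W2 -> R)
  (pi1 : X1 * R -> Y1) (pi2 : X2 * R -> Y2)
  (rho1 : Y1 * R -> W1) (rho2 : Y2 * R -> W2)
  (hR1 : is_reeb_graph f1) (hR2 : is_reeb_graph f2)
  (hY1 : is_thickening f1 eps pi1 g1) (hY2 : is_thickening f2 eps pi2 g2)
  (hW1 : is_thickening g1 eps rho1 k1) (hW2 : is_thickening g2 eps rho2 k2)
  (phi : X1 -> Y2) (psi : X2 -> Y1)
  (hphi : reeb_morphism f1 g2 phi) (hpsi : reeb_morphism f2 g1 psi)
  (phie : Y1 -> W2) (psie : Y2 -> W1)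
  (hphie : forall x t, `|t| <= eps -> phie (pi1 (x, t)) = rho2 (phi x, t))
  (hpsie : forall x t, `|t| <= eps -> psie (pi2 (x, t)) = rho1 (psi x, t))
  (hint1 : forall x : X2, phie (psi x) = rho2 (pi2 (x, 0), 0))
  (hint2 : forall x : X1, psie (phi x) = rho1 (pi1 (x, 0), 0)) :
  (forall (v : X1) (z : Y2), split_or_max f1 v -> split_or_max g2 z ->
     Mminus g2 eps z (phi v) -> Pset rho2 eps z (phie (pi1 (v, eps)))) /\
  (forall (v : X1) (z : Y2), join_or_min f1 v -> join_or_min g2 z ->
     Mplus g2 eps z (phi v) -> Pset rho2 eps z (phie (pi1 (v, - eps)))).
Proof.
have [S _] := hR2.
have hg2 : continuous g2 := @g_cont R X2 Y2 f2 eps pi2 g2 (rs_f_cont S) hY2.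
have i0 : (0:R) \in `[0, 1] by rewrite in_itv /= lexx ler01.
have i1 : (1:R) \in `[0, 1] by rewrite in_itv /= lexx ler01.
have s0 : forall s : R, s \in `[0, 1] -> 0 <= s by move=> s; rewrite in_itv /= => /andP[].
have s1 : forall s : R, s \in `[0, 1] -> s <= 1 by move=> s; rewrite in_itv /= => /andP[].
split.
- move=> v z _ _ [gam [[hc h0 h1] hmon hh hle]].
  have hb : forall s, s \in `[0, 1] -> `|(g2 (phi v) + eps) - g2 (gam s)| <= eps.
    move=> s hs; rewrite ler_norml.
    have up := hh s 0 hs i0; rewrite h0 in up.
    have lo : g2 (phi v) <= g2 (gam s).
      case: hmon => hm.
        by rewrite -h0; exact: (hm 0 s i0 hs (s0 s hs)).
      have := hm s 1 hs i1 (s1 s hs); have := hle 0 i0.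
      rewrite /= h0 h1 => a b; exact: le_trans a b.
    apply/andP; split; lra.
  have := @key R Y2 W2 g2 eps rho2 k2 gam _ hg2 hW2 hc hb; rewrite h0 h1 => E.
  exists (g2 (phi v) + eps - g2 z); split; first by rewrite -h1; exact: hb.
  rewrite hphie ?ger0_norm // -E; congr (rho2 (_, _)); lra.
- move=> v z _ _ [gam [[hc h0 h1] hmon hh hle]].
  have hb : forall s, s \in `[0, 1] -> `|(g2 (phi v) - eps) - g2 (gam s)| <= eps.
    move=> s hs; rewrite ler_norml.
    have lo := hh 0 s i0 hs; rewrite h0 in lo.
    have up : g2 (gam s) <= g2 (phi v).
      case: hmon => hm; last first.
        by rewrite -h0; exact: (hm 0 s i0 hs (s0 s hs)).
      have := hm s 1 hs i1 (s1 s hs); have := hle 0 i0.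
      rewrite /= h0 h1 => a b; exact: le_trans b a.
    apply/andP; split; lra.
  have := @key R Y2 W2 g2 eps rho2 k2 gam _ hg2 hW2 hc hb; rewrite h0 h1 => E.
  exists (g2 (phi v) - eps - g2 z); split; first by rewrite -h1; exact: hb.
  rewrite hphie ?normrN ?ger0_norm // -E; congr (rho2 (_, _)); lra.
Qed.
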